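(* Let $\Delta=\{\mathscr J_1,\dots,\mathscr J_m\}$ be any collection of subsets of $\{1,\dots,n\}$ and let $\mathcal K=\bigcap_i\mathscr J_i$. Suppose that $Q$ is a prime ideal of $R$ containing $I_\Delta+L_{\mathcal K}$. Then for each $\mathscr J_i$ there is some $\mathscr J_j$ such that $Q$ contains $L_{\mathscr J_i\cap\mathscr J_j}$.
   Context: $\mathbb K$ is a field, $R=\mathbb K[x_{i_1,\dots,i_n}:1\le i_j\le a_j]$, $A=(x_{i_1,\dots,i_n})$ the generic table. For a tuple $\sigma$ with $\sigma_j\in\{1,\dots,a_j\}\cup\{+\}$, $x_\sigma$ is the sum of all $x_{i_1,\dots,i_n}$ with $i_j=\sigma_j$ whenever $\sigma_j\ne+$. For $\mathscr J=\{j_1<\dots<j_m\}\subseteq\{1,\dots,n\}$ the margin $A_{\mathscr J}$ is the table whose $(i_1,\dots,i_m)$ entry is $x_\sigma$ with $\sigma_{j_r}=i_r$, $\sigma_j=+$ for $j\notin\mathscr J$; $L_{\mathscr J}$ is the ideal generated by the entries of $A_{\mathscr J}$. For a table $B$ with entries in $R$, $I(B)$ is the ideal generated by its generalized $2\times2$ minors $\det\begin{pmatrix} b_{i_1,\dots,i_m} & b_{j_1,\dots,j_{l-1},i_l,j_{l+1},\dots,j_m}\\ b_{i_1,\dots,i_{l-1},j_l,i_{l+1},\dots,i_m} & b_{j_1,\dots,j_m}\end{pmatrix}$, and $I_\Delta=\sum_{\mathscr J\in\Delta}I(A_{\mathscr J})$. *)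

(* Defs.v *)
From HB Require Import structures.
From mathcomp Require Import all_boot all_algebra.
From mathcomp Require Import mpoly.
Set Implicit Arguments. Unset Strict Implicit. Unset Printing Implicit Defensive.
Import GRing.Theory.
Local Open Scope ring_scope.

(* Cells of the n-way table: tuples (i_1,...,i_n) with i_j in 'I_(a j)
   (0-based version of 1 <= i_j <= a_j). *)
Definition cell (n : nat) (a : 'I_n -> nat) : finType :=
  {dffun forall j : 'I_n, 'I_(a j)}.

(* The ring R = K[x_c : c cell], variables numbered through enum_rank. *)
Definition polyR (K : fieldType) (n : nat) (a : 'I_n -> nat) :=
  {mpoly K[#|cell a|]}.

Definition xvar (K : fieldType) (n : nat) (a : 'I_n -> nat) (c : cell a)
  : polyR K a := 'X_(enum_rank c).

(* x_sigma, where sigma_j = f j for j in J and sigma_j = + for j notin J: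
   the sum of all x_d with d j = f j for j in J. *)
Definition xsigma (K : fieldType) (n : nat) (a : 'I_n -> nat)
  (J : {set 'I_n}) (f : 'I_n -> nat) : polyR K a :=
  \sum_(d : cell a | [forall j in J, (d j : nat) == f j]) @xvar K n a d.

Definition cellnat (n : nat) (a : 'I_n -> nat) (c : cell a) : 'I_n -> nat :=
  fun j => (c j : nat).

Definition upd (n : nat) (a : 'I_n -> nat) (c d : cell a) (l : 'I_n)
  : 'I_n -> nat :=
  fun k => if k == l then (d l : nat) else (c k : nat).

(* Generators of L_J: the entries of the margin A_J (the entry indexed by the
   restriction of c to J). *)
Definition L_gen (K : fieldType) (n : nat) (a : 'I_n -> nat) (J : {set 'I_n})
  (p : polyR K a) : Prop :=
  exists c : cell a, p = @xsigma K n a J (cellnat c).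

(* Generators of I(A_J): generalized 2x2 minors of the margin A_J. *)
Definition I_gen (K : fieldType) (n : nat) (a : 'I_n -> nat) (J : {set 'I_n})
  (p : polyR K a) : Prop :=
  exists (c d : cell a) (l : 'I_n), l \in J /\
    p = @xsigma K n a J (cellnat c) * @xsigma K n a J (cellnat d)
        - @xsigma K n a J (upd d c l) * @xsigma K n a J (upd c d l).

Definition IDelta_gen (K : fieldType) (n : nat) (a : 'I_n -> nat)
  (Delta : {set {set 'I_n}}) (p : polyR K a) : Prop :=
  exists2 J, J \in Delta & @I_gen K n a J p.

Definition gen_ideal (R : comRingType) (S : R -> Prop) (x : R) : Prop :=
  exists (k : nat) (r s : 'I_k -> R),
    (forall i, S (s i)) /\ x = \sum_(i < k) r i * s i.

Definition is_ideal (R : comRingType) (Q : R -> Prop) : Prop :=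
  [/\ Q 0, (forall x y, Q x -> Q y -> Q (x + y)) &
      (forall r x, Q x -> Q (r * x))].

Definition prime_ideal (R : comRingType) (Q : R -> Prop) : Prop :=
  [/\ is_ideal Q, ~ Q 1 & (forall x y, Q (x * y) -> Q x \/ Q y)].

(* Main.v *)
Require Import Defs.
From HB Require Import structures.
From mathcomp Require Import all_boot all_algebra.
From mathcomp Require Import mpoly.
Set Implicit Arguments. Unset Strict Implicit. Unset Printing Implicit Defensive.
Import GRing.Theory.

From Stdlib Require Import Classical.
Local Open Scope ring_scope.
Definition setc (n : nat) (a : 'I_n -> nat) (c : cell a) (j : 'I_n) (m : nat)
  : cell a := [ffun i => insubd (c i) (if i == j then m else (c i : nat))].

Lemma setcE (n : nat) (a : 'I_n -> nat) (c : cell a) (j : 'I_n) (m : 'I_(a j)) i :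
  (setc c j m i : nat) = if i == j then (m : nat) else c i.
Proof.
rewrite /setc ffunE val_insubd; case: eqP => [->|//]; by rewrite ltn_ord.
Qed.

Lemma setc_neq (n : nat) (a : 'I_n -> nat) (c : cell a) (j : 'I_n) (m : nat) i :
  i != j -> (setc c j m i : nat) = c i.
Proof. by move=> /negbTE h; rewrite /setc ffunE h val_insubd ltn_ord. Qed.

Lemma xsigma_ext (K : fieldType) (n : nat) (a : 'I_n -> nat) (J : {set 'I_n}) f g :
  (forall i, i \in J -> f i = g i) -> @xsigma K n a J f = @xsigma K n a J g.
Proof.
move=> h; apply: eq_bigl => d; apply: eq_forallb => i.
by case: (boolP (i \in J)) => // /h ->.
Qed.

Lemma sum_setc (K : fieldType) (n : nat) (a : 'I_n -> nat) (S : {set 'I_n})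
   (c : cell a) j : j \in S ->
  \sum_(m < a j) @xsigma K n a S (cellnat (setc c j m))
   = @xsigma K n a (S :\ j) (cellnat c).
Proof.
move=> jS; rewrite /xsigma.
under eq_bigr => m _ do rewrite big_mkcond.
rewrite exchange_big /= [RHS]big_mkcond /=; apply: eq_bigr => d _.
rewrite (bigD1 (d j)) //= big1 ?addr0.
  congr (if _ then _ else _).
  apply/forallP/forallP => h i; apply/implyP => iS.
    move: iS; rewrite in_setD1 => /andP [ij iS].
    by have := implyP (h i) iS; rewrite /cellnat setcE (negbTE ij).
  rewrite /cellnat setcE; case: (eqVneq i j) => [->//|ij].
  by have := implyP (h i); rewrite in_setD1 ij iS; apply.
move=> m /negbTE mj; case: ifP => // /forallP h.
have := implyP (h j) jS; rewrite /cellnat setcE eqxx => /eqP e.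
by move: mj; rewrite (_ : d j = m) ?eqxx //; apply: val_inj.
Qed.

Lemma Q_sum (R : comRingType) (Q : R -> Prop) (I : Type) (r : seq I) (P : pred I) F :
  is_ideal Q -> (forall i, P i -> Q (F i)) -> Q (\sum_(i <- r | P i) F i).
Proof. by case=> Q0 QD _ h; apply: big_ind. Qed.

Lemma Q_mull (R : comRingType) (Q : R -> Prop) x y : is_ideal Q -> Q y -> Q (x * y).
Proof. by case=> _ _ QM; apply: QM. Qed.

Lemma Q_mulr (R : comRingType) (Q : R -> Prop) x y : is_ideal Q -> Q x -> Q (x * y).
Proof. by move=> hI hx; rewrite mulrC; apply: Q_mull. Qed.

Lemma Q_add (R : comRingType) (Q : R -> Prop) x y : is_ideal Q -> Q x -> Q y -> Q (x + y).
Proof. by case=> _ QD _; apply: QD. Qed.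

Lemma Q_sub (R : comRingType) (Q : R -> Prop) x y : is_ideal Q -> Q x -> Q y -> Q (x - y).
Proof.
move=> hI hx hy; apply: Q_add => //; rewrite -mulN1r; exact: Q_mull.
Qed.

Definition QL (K : fieldType) (n : nat) (a : 'I_n -> nat) (Q : polyR K a -> Prop)
  (S : {set 'I_n}) := forall c : cell a, Q (@xsigma K n a S (cellnat c)).

Definition Rel (K : fieldType) (n : nat) (a : 'I_n -> nat) (Q : polyR K a -> Prop)
  (A B : {set 'I_n}) (j : 'I_n) := forall c d : cell a,
  Q (@xsigma K n a A (cellnat c) * @xsigma K n a B (cellnat d)
     - @xsigma K n a A (cellnat (setc c j (d j))) * @xsigma K n a B (cellnat (setc d j (c j)))).

Lemma QL_del (K : fieldType) (n : nat) (a : 'I_n -> nat) (Q : polyR K a -> Prop) (S : {set 'I_n}) k :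
  is_ideal Q -> QL Q S -> QL Q (S :\ k).
Proof.
move=> hI hS c; case: (boolP (k \in S)) => kS.
  by rewrite -sum_setc //; apply: Q_sum.
have -> : S :\ k = S by apply/setP => x; rewrite !inE; case: eqP => // ->; rewrite (negbTE kS).
  exact: hS.
Qed.

Lemma QL_seq (K : fieldType) (n : nat) (a : 'I_n -> nat) (Q : polyR K a -> Prop) (S : {set 'I_n})
  (s : seq 'I_n) : is_ideal Q -> QL Q S -> QL Q (S :\: [set x in s]).
Proof.
move=> hI hS; elim: s => [|k s IH].
  by rewrite (_ : [set x in [::]] = set0) ?setD0 //; apply/setP => x; rewrite !inE.
rewrite (_ : S :\: _ = (S :\: [set x in s]) :\ k); first exact: QL_del.
by apply/setP => x; rewrite !inE negb_or andbA andbAC.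
Qed.

Lemma QL_sub (K : fieldType) (n : nat) (a : 'I_n -> nat) (Q : polyR K a -> Prop) (S T : {set 'I_n}) :
  is_ideal Q -> S \subset T -> QL Q T -> QL Q S.
Proof.
move=> hI sST hT.
rewrite (_ : S = T :\: [set x in enum (T :\: S)]); first exact: QL_seq.
apply/setP => x; rewrite !inE mem_enum !inE negb_and negbK.
case: (boolP (x \in S)) => xS /=; last by rewrite andNb.
by rewrite (subsetP sST).
Qed.

Lemma Rel_del (K : fieldType) (n : nat) (a : 'I_n -> nat) (Q : polyR K a -> Prop) (A B : {set 'I_n}) j k :
  is_ideal Q -> k != j -> Rel Q A B j -> Rel Q (A :\ k) B j.
Proof.
move=> hI kj hR c d.
case: (boolP (k \in A)) => kA; last first.
  have -> : A :\ k = A by apply/setP => x; rewrite !inE; case: eqP => // ->; rewrite (negbTE kA).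
  exact: hR.
rewrite -!sum_setc // !mulr_suml -sumrB; apply: Q_sum => // m _.
have := hR (setc c k m) d.
rewrite setc_neq 1?eq_sym //.
congr (Q (_ - _ * _)); apply: xsigma_ext => i _.
rewrite /cellnat; case: (eqVneq i j) => [->|ij].
  by rewrite setcE eqxx setc_neq 1?eq_sym // setcE eqxx.
rewrite setc_neq //; case: (eqVneq i k) => [->|ik].
  by rewrite !setcE !eqxx.
by rewrite !setc_neq.
Qed.

Lemma Rel_seq (K : fieldType) (n : nat) (a : 'I_n -> nat) (Q : polyR K a -> Prop) (A B : {set 'I_n}) j
  (s : seq 'I_n) : is_ideal Q -> j \notin s -> Rel Q A B j -> Rel Q (A :\: [set x in s]) B j.
Proof.
move=> hI; elim: s => [|k s IH].
  by rewrite (_ : [set x in [::]] = set0) ?setD0 //; apply/setP => x; rewrite !inE.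
rewrite inE negb_or => /andP [jk js] hR.
rewrite (_ : A :\: _ = (A :\: [set x in s]) :\ k).
  by apply: Rel_del => //; [rewrite eq_sym | apply: IH].
by apply/setP => x; rewrite !inE negb_or andbA andbAC.
Qed.

Lemma Rel_sub (K : fieldType) (n : nat) (a : 'I_n -> nat) (Q : polyR K a -> Prop) (A B : {set 'I_n}) j :
  is_ideal Q -> A \subset B -> j \in A -> Rel Q B B j -> Rel Q A B j.
Proof.
move=> hI sAB jA hB.
rewrite (_ : A = B :\: [set x in enum (B :\: A)]).
  by apply: Rel_seq => //; rewrite mem_enum !inE jA.
apply/setP => x; rewrite !inE mem_enum !inE negb_and negbK.
case: (boolP (x \in A)) => xA /=; last by rewrite andNb.
by rewrite (subsetP sAB).
Qed.

Lemma Step (K : fieldType) (n : nat) (a : 'I_n -> nat) (Q : polyR K a -> Prop)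
  (S J : {set 'I_n}) j : prime_ideal Q -> j \in J -> j \notin S ->
  QL Q S -> Rel Q (S :|: [set j]) J j -> ~ QL Q (J :\ j) -> QL Q (S :|: [set j]).
Proof.
case=> hI _ hP jJ jS hS hR nQ.
have [d0 hd0] : exists d0 : cell a, ~ Q (@xsigma K n a (J :\ j) (cellnat d0)).
  by apply: not_all_ex_not.
move=> c.
set T := S :|: [set j].
have jT : j \in T by rewrite !inE eqxx orbT.
suff : Q (@xsigma K n a T (cellnat c) * @xsigma K n a (J :\ j) (cellnat d0)).
  by case/hP.
set e := setc d0 j (c j).
rewrite -sum_setc // mulr_sumr.
rewrite (_ : \sum_(m < a j) _ =
  \sum_(m < a j) (@xsigma K n a T (cellnat c) * @xsigma K n a J (cellnat (setc d0 j m))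
     - @xsigma K n a T (cellnat (setc c j m)) * @xsigma K n a J (cellnat e))
  + (\sum_(m < a j) @xsigma K n a T (cellnat (setc c j m))) * @xsigma K n a J (cellnat e)).
  apply: Q_add => //.
    apply: Q_sum => // m _.
    have := hR c (setc d0 j m).
    rewrite setcE eqxx.
    congr (Q (_ - _ * _)); apply: xsigma_ext => i _.
    rewrite /cellnat; case: (eqVneq i j) => [->|ij].
      by rewrite !setcE !eqxx.
    by rewrite !setc_neq.
  rewrite sum_setc //.
  have -> : T :\ j = S.
    apply/setP => x; rewrite !inE; case: (eqVneq x j) => [->|] /=.
      by rewrite (negbTE jS).
    by rewrite orbF.
  exact: Q_mulr.
by rewrite mulr_suml -big_split /=; apply: eq_bigr => m _; rewrite subrK.
Qed.

Theorem lemma6p3 (K : fieldType) (n : nat) (a : 'I_n -> nat)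
  (Delta : {set {set 'I_n}}) (Q : polyR K a -> Prop) :
  prime_ideal Q ->
  (forall x, gen_ideal (fun p => @IDelta_gen K n a Delta p \/
                                 @L_gen K n a (\bigcap_(J in Delta) J) p) x -> Q x) ->
  forall Ji, Ji \in Delta ->
    exists2 Jj, Jj \in Delta &
      forall x, gen_ideal (@L_gen K n a (Ji :&: Jj)) x -> Q x.
Proof.
move=> hQ hH Ji JiD.
have hI : is_ideal Q by case: hQ.
have one : forall p, (IDelta_gen Delta p \/ L_gen (\bigcap_(J in Delta) J) p) -> Q p.
  move=> p hp; apply: hH; exists 1%N, (fun _ => 1), (fun _ => p); split => //.
  by rewrite big_ord1 mul1r.
have QLK : QL Q (\bigcap_(J in Delta) J).
  by move=> c; apply: one; right; exists c.
have RJ : forall j, j \in Ji -> Rel Q Ji Ji j.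
  move=> j jJ c d; apply: one; left; exists Ji => //.
  exists c, d, j; split => //.
  rewrite [X in _ - X]mulrC; congr (_ - _ * _); apply: xsigma_ext => i _;
    rewrite /cellnat /upd; (case: (eqVneq i j) => [->|ij]; [by rewrite setcE eqxx | by rewrite setc_neq]).
have fin : forall S, QL Q S ->
    forall x, gen_ideal (@L_gen K n a S) x -> Q x.
  move=> S hS x [k [r [s [hs ->]]]]; apply: Q_sum => // i _.
  by apply: Q_mull => //; case: (hs i) => c ->; apply: hS.
have KJ : \bigcap_(J in Delta) J \subset Ji by apply: bigcap_inf.
case: (classic (QL Q Ji)) => [hJ | nJ].
  by exists Ji => //; rewrite setIid; apply: fin.
case: (classic (exists j0, [/\ j0 \in Ji, j0 \notin \bigcap_(J in Delta) J & QL Q (Ji :\ j0)]))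
  => [[j0 [j0J j0K hj0]] | nex].
  have [Jj JjD j0Jj] : exists2 Jj, Jj \in Delta & j0 \notin Jj.
    apply: NNPP => hn; apply: (negP j0K); apply/bigcapP => J JD.
    by apply: NNPP => hJ; apply: hn; exists J => //; apply/negP.
  exists Jj => //; apply: fin; apply: QL_sub (hj0) => //.
  apply/subsetP => x; rewrite !inE => /andP [xi xj]; rewrite xi andbT.
  by apply: contraNneq j0Jj => <-.
exfalso; apply: nJ.
have build : forall s : seq 'I_n, {subset s <= Ji} ->
    QL Q (\bigcap_(J in Delta) J :|: [set x in s]).
  elim => [|k s IH] hs.
    by rewrite (_ : [set x in [::]] = set0) ?setU0 //; apply/setP => x; rewrite !inE.
  have IH' : QL Q (\bigcap_(J in Delta) J :|: [set x in s]).
    by apply: IH => x xs; apply: hs; rewrite inE xs orbT.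
  have kJ : k \in Ji by apply: hs; rewrite inE eqxx.
  have -> : \bigcap_(J in Delta) J :|: [set x in k :: s]
      = (\bigcap_(J in Delta) J :|: [set x in s]) :|: [set k].
    by apply/setP => x; rewrite !inE; case: (x == k); rewrite ?orbT ?orbF.
  case: (boolP (k \in \bigcap_(J in Delta) J :|: [set x in s])) => kin.
    by rewrite (setUidPl _) // sub1set.
  apply: (@Step _ _ _ _ _ Ji) => //.
    apply: Rel_sub => //; last (by apply: RJ); last by rewrite !inE eqxx orbT.
    apply/subsetP => x; rewrite !inE => /orP [/orP [xK|xs]|/eqP ->] //.
      exact: (subsetP KJ).
    by apply: hs; rewrite inE xs orbT.
  move=> hq; apply: nex; exists k; split => //.
  by apply: contra kin; rewrite inE => ->.
rewrite (_ : Ji = \bigcap_(J in Delta) J :|: [set x in enum Ji]).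
  by apply: build => x; rewrite mem_enum.
apply/setP => x; rewrite !inE mem_enum.
case: (boolP (x \in Ji)) => xJ; rewrite ?orbT // orbF; apply/esym/negbTE; apply: contra xJ; apply: (subsetP KJ).
Qed.
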